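(* Let $w\in\mathbb{R}^N_{>0}$ and assume $\mu_i\ge1$ for all $i$. Then $$\min_{x\in\mathbb{R}^N}\Big(\sum_{r\in[R]}f_r(x)+\tfrac12\|x\|_{2,w}^2\Big)=-\min_{y\in\mathcal{B}}\tfrac12\|Ay\|^2_{2,w^{-1}},$$ and the primal minimizer $x^*_w$ satisfies $x^*_w=-w^{-1}\odot Ay$ for every minimizer $y$ of $\|Ay\|^2_{2,w^{-1}}$ over $\mathcal{B}$. Moreover, for every $y\in\mathcal{B}$, $\min_{a\in\mathcal{A}}\|a-y\|^2_{2,I(w^{-1}\odot\mu)}=\|Ay\|^2_{2,w^{-1}}$, so that the problem $\min_{a,y}\|a-y\|^2_{2,I(w^{-1}\odot\mu)}$ subject to $y\in\mathcal{B}$, $a\in\mathcal{A}$ has the same optimal value and optimal $y$'s as $\min_{y\in\mathcal{B}}\|Ay\|^2_{2,w^{-1}}$.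
   Context: $F_r:2^{[N]}\to\mathbb{R}$ ($r\in[R]$) are submodular with $F_r(\emptyset)=0$, base polytopes $\mathcal{B}_r=\{u\in\mathbb{R}^N:\sum_{i\in S}u_i\le F_r(S)\ \forall S,\ \sum_iu_i=F_r([N])\}$ and Lovász extensions $f_r(x)=\max_{u\in\mathcal{B}_r}\langle u,x\rangle$; $\mathcal{B}=\mathcal{B}_1\times\cdots\times\mathcal{B}_R$; $A:(\mathbb{R}^N)^R\to\mathbb{R}^N$, $Ay=\sum_ry_r$. $S_r$ is the set of $i$ with $F_r(S\cup\{i\})\ne F_r(S)$ for some $S\subseteq[N]\setminus\{i\}$; $\mu_i=|\{r:i\in S_r\}|$. $\mathcal{A}=\{a\in(\mathbb{R}^N)^R:Aa=0,\ a_{r,i}=0\text{ whenever }i\notin S_r\}$. Powers ($w^{-1}$) and products ($\odot$) are element-wise. $\|z\|_{2,w}=\sqrt{\sum_iw_iz_i^2}$; $I(v)\in(\mathbb{R}^N)^R$ has all blocks equal to $v$; $\|y\|_{2,\theta}=\sqrt{\sum_r\|y_r\|^2_{2,\theta_r}}$. *)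

(* Defs.v *)
(* the statement is purely order-algebraic (finite sums,
   linear/quadratic forms, minima), so it is stated over an arbitrary
   real closed field T (the reals being one instance). *)
From HB Require Import structures.
From mathcomp Require Import all_boot all_order all_algebra.
From Stdlib Require Import ClassicalEpsilon.
Set Implicit Arguments. Unset Strict Implicit. Unset Printing Implicit Defensive.
Import Order.TTheory GRing.Theory Num.Theory.
Local Open Scope ring_scope.

Definition submodular (T : realDomainType) (N : nat) (F : {set 'I_N} -> T) : Prop :=
  forall A B : {set 'I_N}, F (A :|: B) + F (A :&: B) <= F A + F B.

Definition in_base (T : realDomainType) (N : nat) (F : {set 'I_N} -> T)
  (u : 'I_N -> T) : Prop :=
  (forall S : {set 'I_N}, \sum_(i in S) u i <= F S) /\ \sum_i u i = F setT.

Definition is_max_of (T : realDomainType) (P : T -> Prop) (v : T) : Prop :=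
  P v /\ forall z, P z -> z <= v.

Definition lovasz (T : realDomainType) (N : nat) (F : {set 'I_N} -> T)
  (x : 'I_N -> T) : T :=
  epsilon (inhabits 0)
    (is_max_of (fun z => exists u, in_base F u /\ z = \sum_i u i * x i)).

Definition minimizer_on (X : Type) (T : realDomainType) (S : X -> Prop)
  (f : X -> T) (x : X) : Prop :=
  S x /\ forall z, S z -> f x <= f z.

Definition support_set (T : realDomainType) (N : nat) (F : {set 'I_N} -> T)
  : {set 'I_N} :=
  [set i | [exists S : {set 'I_N}, (i \notin S) && (F (i |: S) != F S)]].

Definition mu (T : realDomainType) (N R : nat) (F : 'I_R -> {set 'I_N} -> T)
  (i : 'I_N) : nat :=
  #|[set r : 'I_R | i \in support_set (F r)]|.

Definition in_B (T : realDomainType) (N R : nat) (F : 'I_R -> {set 'I_N} -> T)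
  (y : 'I_R -> 'I_N -> T) : Prop :=
  forall r, in_base (F r) (y r).

Definition Aop (T : realDomainType) (N R : nat) (y : 'I_R -> 'I_N -> T)
  : 'I_N -> T :=
  fun i => \sum_(r < R) y r i.

Definition in_A (T : realDomainType) (N R : nat) (F : 'I_R -> {set 'I_N} -> T)
  (a : 'I_R -> 'I_N -> T) : Prop :=
  (forall i, Aop a i = 0) /\
  (forall r i, i \notin support_set (F r) -> a r i = 0).

Definition wnorm2 (T : realDomainType) (N : nat) (w z : 'I_N -> T) : T :=
  \sum_i w i * z i ^+ 2.

Definition wnorm2_prod (T : realDomainType) (N R : nat)
  (th y : 'I_R -> 'I_N -> T) : T :=
  \sum_(r < R) wnorm2 (th r) (y r).

Definition Ivec (T : Type) (N R : nat) (v : 'I_N -> T) : 'I_R -> 'I_N -> T :=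
  fun _ => v.

(* Main.v *)
Require Import Defs.
From HB Require Import structures.
From mathcomp Require Import all_boot all_order all_algebra.
From Stdlib Require Import ClassicalEpsilon FunctionalExtensionality.
From mathcomp Require Import ring lra zify.
Set Implicit Arguments. Unset Strict Implicit. Unset Printing Implicit Defensive.
Import Order.TTheory GRing.Theory Num.Theory.
Local Open Scope ring_scope.
Section ML.
Variable T : rcfType.
Variable d : nat.

Definition qconv (psi : 'rV[T]_d -> T) := forall (u v : 'rV[T]_d) (t : T),
  0 <= t -> t <= 1 -> psi (u + t *: (v - u)) <= Num.max (psi u) (psi v).
Definition hasmin (psi : 'rV[T]_d -> T) := exists g, forall g', psi g <= psi g'.
Definition Good (psi : 'rV[T]_d -> T) := qconv psi /\
  forall (p : 'rV[T]_d) (M : 'M[T]_d), hasmin (fun g => psi (p + g *m M)).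
Definition affine (g : 'rV[T]_d -> T) :=
  exists (a : 'cV[T]_d) (b : T), forall x, g x = (x *m a) 0 0 + b.

Lemma Good_comp psi p0 M0 : Good psi -> Good (fun g => psi (p0 + g *m M0)).
Proof.
case=> hq hm; split.
  move=> u v t t0 t1.
  have -> : p0 + (u + t *: (v - u)) *m M0 =
     (p0 + u *m M0) + t *: ((p0 + v *m M0) - (p0 + u *m M0)).
    by rewrite mulmxDl -scalemxAl mulmxBl addrA opprD addrACA subrr add0r.
  exact: hq.
move=> p M; have [g hg] := hm (p0 + p *m M0) (M *m M0).
exists g => g'.
have E : forall h, p0 + (p + h *m M) *m M0 = p0 + p *m M0 + h *m (M *m M0).
  by move=> h; rewrite mulmxDl addrA mulmxA.
by rewrite !E.
Qed.

Lemma affine_seg g x y t : affine g -> g (x + t *: (y - x)) = g x + t * (g y - g x).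
Proof.
case=> a [b hg]; rewrite !hg mulmxDl -scalemxAl mulmxBl.
move: (x *m a) (y *m a) => X Y; rewrite !mxE; ring.
Qed.

Lemma feas_split m (P : 'I_m.+1 -> Prop) :
  (forall k, P k) <-> (forall k : 'I_m, P (widen_ord (leqnSn m) k)) /\ P ord_max.
Proof.
split; first by move=> h; split.
case=> h1 h2 k; have [km|km] := ltnP k m.
  by have -> : k = widen_ord (leqnSn m) (Ordinal km) by apply: val_inj.
have -> : k = ord_max; last by [].
by apply: val_inj => /=; apply/eqP; rewrite eqn_leq km -ltnS ltn_ord.
Qed.

Lemma mx11E (A : 'M[T]_1) : A = (A 0 0)%:M.
Proof. by apply/matrixP => i j; rewrite !ord1 mxE eqxx mulr1n. Qed.

Lemma ML m : forall (g : 'I_m -> 'rV[T]_d -> T) psi,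
  (forall k, affine (g k)) -> Good psi ->
  (exists x, forall k, g k x <= 0) ->
  exists x, (forall k, g k x <= 0) /\
            forall y, (forall k, g k y <= 0) -> psi x <= psi y.
Proof.
elim: m => [|m IH] g psi ha hG hfe.
  have [x hx] := hG.2 0 1%:M.
  exists x; split; first by case.
  by move=> y _; have := hx y; rewrite !add0r !mulmx1.
pose gr k := g (widen_ord (leqnSn m) k); pose gl := g ord_max.
have feq : forall x, (forall k, g k x <= 0) <-> (forall k, gr k x <= 0) /\ gl x <= 0.
  by move=> x; apply: (feas_split (fun k => g k x <= 0)).
have har : forall k, affine (gr k) by move=> k; apply: ha.
have [z0 hz0] := hfe; have /feq [hz0r hz0l] := hz0.
have [x' [hx'f hx'm]] := IH gr psi har hG (ex_intro _ z0 hz0r).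
have [hl|hl] := lerP (gl x') 0.
  by exists x'; split => [|y hy]; [apply/feq | apply: hx'm; have /feq[] := hy].
pose t y := gl x' / (gl x' - gl y).
pose pt y := x' + t y *: (y - x').
have hpt : forall y, (forall k, g k y <= 0) ->
   [/\ gl (pt y) = 0, (forall k, gr k (pt y) <= 0) & psi (pt y) <= psi y].
  move=> y /feq [hyr hyl].
  have hd : 0 < gl x' - gl y by rewrite subr_gt0 (le_lt_trans hyl hl).
  have t0 : 0 <= t y by rewrite divr_ge0 // ltW.
  have t1 : t y <= 1 by rewrite ler_pdivrMr // mul1r lerDl oppr_ge0.
  split.
  - rewrite /pt affine_seg; last exact: ha.
    rewrite /t; move: hd; move: (gl x') (gl y) => A B hd.
    by field; rewrite gt_eqF.
  - move=> k; rewrite /pt affine_seg; last exact: har.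
    have := hx'f k; have := hyr k => h1 h2.
    move: t0 t1 h1 h2; move: (t y) (gr k x') (gr k y) => s A B s0 s1 hB hA; nra.
  - have h := hG.1 x' y (t y) t0 t1. apply: le_trans h _.
    by rewrite ge_max lexx andbT; apply: hx'm.
have [a [b hgl]] := ha ord_max.
have gl_diff : forall x y, ((x - y) *m a) = (gl x - gl y)%:M.
  move=> x y; have -> : gl x - gl y = (x *m a) 0 0 - (y *m a) 0 0 by rewrite /gl !hgl; ring.
  rewrite mulmxBl; move: (x *m a) (y *m a) => X Y.
  by apply/matrixP => i j; rewrite !ord1 !mxE eqxx mulr1n.
have ha0 : a != 0.
  apply/eqP => a0; move: hl hz0l; rewrite /gl !hgl a0 !mulmx0 !mxE; lra.
pose s := (a^T *m a) 0 0.
have sE : s = \sum_i a i 0 ^+ 2 by rewrite /s mxE; apply: eq_bigr => i _; rewrite mxE expr2.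
have s0 : 0 < s.
  rewrite lt_def sE sumr_ge0 ?andbT => [|i _]; last exact: sqr_ge0.
  apply/eqP => hs; move/eqP: ha0; apply; apply/matrixP => i j; rewrite ord1 mxE.
  have := psumr_eq0P (fun i _ => sqr_ge0 (a i 0)) hs (i:=i) isT.
  by move/eqP; rewrite sqrf_eq0 => /eqP.
pose Pi := 1%:M - s^-1 *: (a *m a^T).
have hPi : forall gam : 'rV_d, gam *m Pi = gam - s^-1 *: ((gam *m a) *m a^T).
  by move=> gam; rewrite /Pi mulmxBr mulmx1 -scalemxAr mulmxA.
have hPa : forall gam : 'rV_d, (gam *m Pi) *m a = 0.
  move=> gam; rewrite hPi mulmxBl -scalemxAl -!mulmxA [a^T *m a]mx11E -/s.
  by rewrite mul_mx_scalar -scalemxAr scalerA mulVf ?gt_eqF // scale1r subrr.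
pose p0 := pt z0.
have [hp0l hp0r _] := hpt z0 hz0.
pose h gam := p0 + gam *m Pi.
have hglh : forall gam, gl (h gam) = 0.
  move=> gam; have E := gl_diff (h gam) p0.
  have E' : (h gam - p0) *m a = 0 by rewrite /h addrAC subrr add0r hPa.
  rewrite E' hp0l subr0 in E; have := congr1 (fun M : 'M[T]_1 => M 0 0) E.
  by rewrite !mxE eqxx mulr1n => ->.
have hinv : forall y, gl y = 0 -> h (y - p0) = y.
  move=> y hy; rewrite /h hPi gl_diff hy hp0l subrr raddf0 mul0mx scaler0 subr0.
  by rewrite addrC subrK.
pose g' k gam := gr k (h gam).
have ha' : forall k, affine (g' k).
  move=> k; have [ak [bk hk]] := har k.
  exists (Pi *m ak), ((p0 *m ak) 0 0 + bk) => gam.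
  rewrite /g' hk /h mulmxDl mulmxA; move: (p0 *m ak) (gam *m Pi *m ak) => X Y.
  by rewrite !mxE; ring.
have hG' := Good_comp p0 Pi hG.
have hf' : exists gam, forall k, g' k gam <= 0.
  by exists 0 => k; rewrite /g' /h mul0mx addr0.
have [gs [hgsf hgsm]] := IH g' _ ha' hG' hf'.
exists (h gs); split.
  by apply/feq; split => [k|]; [apply: hgsf | rewrite hglh].
move=> y hy; have [e1 e2 e3] := hpt y hy.
have := hgsm (pt y - p0); rewrite /= -/(h gs) -/(h _) hinv // => H.
apply: le_trans (H _) e3 => k; rewrite /g' hinv //.
Qed.

Definition nrm n (v : 'rV[T]_n) := (v *m v^T) 0 0.
Lemma nrmE n (v : 'rV[T]_n) : nrm v = \sum_j v 0 j ^+ 2.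
Proof. by rewrite /nrm mxE; apply: eq_bigr => j _; rewrite mxE expr2. Qed.
Lemma nrm_ge0 n (v : 'rV[T]_n) : 0 <= nrm v.
Proof. by rewrite nrmE sumr_ge0 // => j _; apply: sqr_ge0. Qed.
Lemma nrmDZ n (A B : 'rV[T]_n) t :
  nrm (A + t *: B) = nrm A + 2 * t * (A *m B^T) 0 0 + t ^+ 2 * nrm B.
Proof.
rewrite !nrmE [(A *m B^T) 0 0]mxE.
transitivity (\sum_j (A 0 j ^+ 2 + 2 * t * (A 0 j * B^T j 0) + t ^+ 2 * B 0 j ^+ 2)).
  by apply: eq_bigr => j _; rewrite !mxE; ring.
by rewrite !big_split /= -!mulr_sumr.
Qed.

Lemma rank_KKt n (K : 'M[T]_(d, n)) : \rank (K *m K^T) = \rank K.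
Proof.
have k1 : (kermx (K *m K^T) <= kermx K)%MS.
  apply/sub_kermxP.
  have hX := mulmx_ker (K *m K^T).
  have hY : (kermx (K *m K^T) *m K) *m (kermx (K *m K^T) *m K)^T = 0.
    by rewrite trmx_mul mulmxA -(mulmxA _ K K^T) hX mul0mx.
  move: hY; move: (kermx (K *m K^T) *m K) => Y hY.
  apply/matrixP => i j; have := congr1 (fun M : 'M_d => M i i) hY.
  rewrite [in RHS]mxE mxE => hs.
  have hs' : \sum_k Y i k ^+ 2 = 0.
    by rewrite -[X in _ = X]hs; apply: eq_bigr => k _; rewrite mxE expr2.
  have := psumr_eq0P (fun k _ => sqr_ge0 (Y i k)) hs' (i:=j) isT.
  by move/eqP; rewrite sqrf_eq0 mxE => /eqP.
have k2 : (kermx K <= kermx (K *m K^T))%MS.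
  by apply/sub_kermxP; rewrite mulmxA mulmx_ker mul0mx.
have := mxrankS k1; have := mxrankS k2; rewrite !mxrank_ker.
have := rank_leq_row K; have := rank_leq_row (K *m K^T); lia.
Qed.

Lemma LS n (u : 'rV[T]_n) (K : 'M[T]_(d, n)) : hasmin (fun g => nrm (u + g *m K)).
Proof.
have hsub : (K *m K^T <= K^T)%MS := submxMl K K^T.
have hsup : (K^T <= K *m K^T)%MS.
  by rewrite -(mxrank_leqif_sup hsub).2 mxrank_tr rank_KKt eqxx.
have hu : (u *m K^T <= K *m K^T)%MS := submx_trans (submxMl u K^T) hsup.
have [D hD] := submxP hu.
exists (-D) => g'.
pose e := u + (- D) *m K.
have he : e *m K^T = 0.
  by rewrite /e mulmxDl hD mulNmx mulNmx mulmxA subrr.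
have -> : u + g' *m K = e + 1 *: ((g' + D) *m K).
  by rewrite scale1r /e mulmxDl mulNmx [g' *m K + _]addrC addrA subrK.
rewrite nrmDZ trmx_mul mulmxA he mul0mx mxE mulr0 addr0.
by rewrite lerDl mulr_ge0 ?sqr_ge0 ?nrm_ge0.
Qed.

Lemma Good_nrm n (u : 'rV[T]_n) (K : 'M[T]_(d, n)) : Good (fun g => nrm (u + g *m K)).
Proof.
split.
  move=> x y t t0 t1.
  have -> : u + (x + t *: (y - x)) *m K = (u + x *m K) + t *: ((y - x) *m K).
    by rewrite mulmxDl -scalemxAl addrA.
  have -> : u + y *m K = (u + x *m K) + 1 *: ((y - x) *m K).
    by rewrite scale1r mulmxBl addrA addrAC addrK.
  rewrite !nrmDZ; move: (nrm_ge0 ((y - x) *m K)).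
  move: (nrm (u + x *m K)) (((u + x *m K) *m ((y - x) *m K)^T) 0 0) (nrm ((y - x) *m K)) => a c b hb.
  set M := Num.max _ _.
  have hM1 : a <= M by rewrite /M le_max lexx.
  have hM2 : a + 2 * 1 * c + 1 ^+ 2 * b <= M by rewrite /M le_max lexx orbT.
  have e1 : 0 <= (1 - t) * (M - a) by rewrite mulr_ge0 // subr_ge0.
  have e2 : 0 <= t * (M - (a + 2 * 1 * c + 1 ^+ 2 * b)) by rewrite mulr_ge0 // subr_ge0.
  have e3 : 0 <= t * (1 - t) * b by rewrite !mulr_ge0 // subr_ge0.
  lra.
move=> p M; have [g hg] := LS (u + p *m K) (M *m K).
exists g => g'.
have E : forall h, u + (p + h *m M) *m K = u + p *m K + h *m (M *m K).
  by move=> h; rewrite mulmxDl addrA mulmxA.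
by rewrite !E.
Qed.

Lemma ML_fin (I : finType) (g : I -> 'rV[T]_d -> T) psi :
  (forall k, affine (g k)) -> Good psi -> (exists x, forall k, g k x <= 0) ->
  exists x, (forall k, g k x <= 0) /\ forall y, (forall k, g k y <= 0) -> psi x <= psi y.
Proof.
move=> ha hG [x0 hx0].
have [x [hx hm]] := @ML #|I| (fun k : 'I_#|I| => g (enum_val k)) psi (fun k => ha _) hG
   (ex_intro _ x0 (fun k => hx0 _)).
have eqv : forall y, (forall k, g k y <= 0) <-> (forall k : 'I_#|I|, g (enum_val k) y <= 0).
  move=> y; split=> h k; first exact: h.
  by rewrite -(enum_rankK k); apply: h.
exists x; split; first by apply/eqv.
by move=> y /eqv; apply: hm.
Qed.

Lemma lin_rep n (f : 'rV[T]_d -> 'rV[T]_n) :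
  (forall u v, f (u + v) = f u + f v) -> (forall c u, f (c *: u) = c *: f u) ->
  exists K : 'M[T]_(d, n), forall u, f u = u *m K.
Proof.
move=> fD fZ.
have f0 : f 0 = 0 by have := fZ 0 0; rewrite !scale0r.
exists (\matrix_(j, i) f (delta_mx 0 j) 0 i) => u.
rewrite {1}[u]row_sum_delta.
have -> : f (\sum_j u 0 j *: delta_mx 0 j) = \sum_j u 0 j *: f (delta_mx 0 j).
  apply: (big_ind2 (fun a b => f a = b)) => //.
    by move=> x1 x2 y1 y2 h1 h2; rewrite fD h1 h2.
apply/rowP => i; rewrite summxE !mxE; apply: eq_bigr => j _; rewrite !mxE.
done.
Qed.

Lemma lin_rep1 (L : 'rV[T]_d -> T) :
  (forall u v, L (u + v) = L u + L v) -> (forall c u, L (c *: u) = c * L u) ->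
  exists a : 'cV[T]_d, forall u, L u = (u *m a) 0 0.
Proof.
move=> LD LZ.
pose f u := \row_(j < 1) L u.
have fD : forall u v, f (u + v) = f u + f v.
  by move=> u v; apply/rowP => j; rewrite !mxE LD.
have fZ : forall c u, f (c *: u) = c *: f u.
  by move=> c u; apply/rowP => j; rewrite !mxE LZ.
have [K hK] := lin_rep fD fZ.
by exists K => u; rewrite -hK mxE.
Qed.

Lemma affine_lin (L : 'rV[T]_d -> T) c :
  (forall u v, L (u + v) = L u + L v) -> (forall c u, L (c *: u) = c * L u) ->
  affine (fun u => L u + c).
Proof. by move=> LD LZ; have [a ha] := lin_rep1 LD LZ; exists a, c => u; rewrite ha. Qed.
End ML.

Section Greedy.
Variable T : rcfType.
Variable N : nat.
Variable F : {set 'I_N} -> T.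
Hypothesis Fsub : submodular F.
Hypothesis F0 : F set0 = 0.
Variable x : 'I_N -> T.

Definition leTx := fun i j : 'I_N => x j <= x i.
Definition gs := sort leTx (enum 'I_N).
Lemma s_uniq : uniq gs. Proof. by rewrite sort_uniq enum_uniq. Qed.
Lemma s_size : size gs = N. Proof. by rewrite size_sort size_enum_ord. Qed.
Lemma s_mem i : i \in gs. Proof. by rewrite mem_sort mem_enum. Qed.
Lemma s_sorted : sorted leTx gs.
Proof. by apply: sort_sorted => i j; rewrite /leTx le_total. Qed.
Definition pre k := [set j | j \in take k gs].
Definition gu i := F (pre (index i gs).+1) - F (pre (index i gs)).

Lemma pre0 : pre 0 = set0. Proof. by apply/setP => j; rewrite !inE take0. Qed.
Lemma preN : pre N = setT.
Proof. by apply/setP => j; rewrite !inE take_oversize ?s_size // s_mem. Qed.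
Lemma preS i0 k : (k < N)%N -> pre k.+1 = nth i0 gs k |: pre k.
Proof.
move=> hk; apply/setP => j; rewrite !inE (take_nth i0) ?s_size //.
by rewrite mem_rcons inE.
Qed.
Lemma nth_notin i0 k : (k < N)%N -> nth i0 gs k \notin pre k.
Proof.
move=> hk; rewrite inE; have hu := s_uniq.
rewrite -(cat_take_drop k.+1 gs) cat_uniq (take_nth i0) ?s_size // rcons_uniq in hu.
by case/andP: hu => /andP[].
Qed.
Lemma gu_nth i0 k : (k < N)%N -> gu (nth i0 gs k) = F (pre k.+1) - F (pre k).
Proof. by move=> hk; rewrite /gu index_uniq ?s_size ?s_uniq. Qed.

Lemma gsum_pre k : (k <= N)%N -> \sum_(j in pre k) gu j = F (pre k).
Proof.
elim: k => [_|k IH hk]; first by rewrite pre0 big_set0 F0.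
pose i0 := Ordinal hk.
rewrite (preS i0 hk) big_setU1 ?nth_notin //= (gu_nth i0 hk) IH ?(ltnW hk) //.
by rewrite -(preS i0 hk) subrK.
Qed.

Lemma sumT (f : 'I_N -> T) : \sum_(j in [set: 'I_N]) f j = \sum_j f j.
Proof. by apply: eq_bigl => j; rewrite inE. Qed.

Lemma g_base : in_base F gu.
Proof.
split; last by have := gsum_pre (leqnn N); rewrite preN sumT.
move=> S.
suff : forall k, (k <= N)%N -> \sum_(j in S :&: pre k) gu j <= F (S :&: pre k).
  by move=> /(_ N (leqnn N)); rewrite preN setIT.
elim => [_|k IH hk]; first by rewrite pre0 setI0 big_set0 F0.
pose i0 := Ordinal hk; pose e := nth i0 gs k.
have he : e \notin pre k := nth_notin i0 hk.
have he' : e \notin take k gs by move: he; rewrite inE.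
rewrite (preS i0 hk) -/e.
case: (boolP (e \in S)) => heS.
- have -> : S :&: (e |: pre k) = e |: (S :&: pre k).
    apply/setP => j; rewrite !inE; case: (eqVneq j e) => [->|] //=.
    by rewrite heS.
  rewrite big_setU1; last by rewrite inE ?(negbTE he) ?(negbTE he') andbF.
  rewrite /= /e (gu_nth i0 hk) -/e.
  have hU : (e |: (S :&: pre k)) :|: pre k = e |: pre k.
    apply/setP => j; rewrite !inE; case: (eqVneq j e) => //= _.
    by case: (j \in S); case: (j \in take k gs).
  have hI : (e |: (S :&: pre k)) :&: pre k = S :&: pre k.
    apply/setP => j; rewrite !inE; case: (eqVneq j e) => [->|] //=.
    by rewrite (negbTE he') andbF.
    by move=> _; rewrite -andbA andbb.
  have := Fsub (e |: (S :&: pre k)) (pre k); rewrite hU hI -(preS i0 hk).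
  have := IH (ltnW hk); lra.
- have -> : S :&: (e |: pre k) = S :&: pre k.
    apply/setP => j; rewrite !inE; case: (eqVneq j e) => [->|] //=.
    by rewrite (negbTE heS).
  exact: IH (ltnW hk).
Qed.

Lemma g_max v : in_base F v -> \sum_i v i * x i <= \sum_i gu i * x i.
Proof.
move=> [hv1 hv2].
have [N0|Npos] := posnP N.
  by rewrite !big1 // => i; have := ltn_ord i; rewrite [in X in (_ < X)%N -> _]N0.
pose i0 := Ordinal Npos.
pose D k := \sum_(j in pre k) (v j - gu j) * x j.
pose E k := \sum_(j in pre k) v j - F (pre k).
have Ele : forall k, E k <= 0 by move=> k; rewrite /E subr_le0 hv1.
have step : forall k, (k < N)%N -> D k.+1 = D k + (v (nth i0 gs k) - gu (nth i0 gs k)) * x (nth i0 gs k)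
     /\ E k.+1 = E k + (v (nth i0 gs k) - gu (nth i0 gs k)).
  move=> k hk; rewrite /D /E (preS i0 hk) !big_setU1 ?nth_notin //= (gu_nth i0 hk).
  split; first by rewrite addrC.
  by rewrite -(preS i0 hk); ring.
have Q : forall k, (k < N)%N -> D k.+1 <= E k.+1 * x (nth i0 gs k).
  elim => [h0|k IH hk].
    have [-> ->] := step 0%N h0.
    by rewrite /D /E pre0 big_set0 big_set0 F0 !add0r oppr0 add0r.
  have [-> ->] := step k.+1 hk.
  have h1 := IH (ltnW hk).
  have hs : x (nth i0 gs k.+1) <= x (nth i0 gs k).
    by have /sortedP := s_sorted; apply; rewrite s_size.
  have := Ele k.+1; move: h1 hs.
  move: (D k.+1) (E k.+1) (x (nth i0 gs k)) (x (nth i0 gs k.+1)) (v (nth i0 gs k.+1) - gu (nth i0 gs k.+1)) => a b c c' z.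
  nra.
have hN : N = N.-1.+1 by rewrite prednK.
have hN1 : (N.-1 < N)%N by rewrite prednK.
have := Q N.-1 hN1; rewrite -hN.
have -> : E N = 0 by rewrite /E preN sumT hv2 subrr.
rewrite mul0r /D preN sumT.
have -> : \sum_i (v i - gu i) * x i = \sum_i v i * x i - \sum_i gu i * x i.
  by rewrite -sumrB; apply: eq_bigr => i _; ring.
by rewrite subr_le0.
Qed.
End Greedy.

Section Lov.
Variable T : rcfType.
Variable N : nat.
Variable F : {set 'I_N} -> T.
Hypothesis Fsub : submodular F.
Hypothesis F0 : F set0 = 0.

Lemma lovasz_spec x : is_max_of (fun z => exists u, in_base F u /\ z = \sum_i u i * x i) (lovasz F x).
Proof.
apply: epsilon_spec; exists (\sum_i gu F x i * x i); split.
  by exists (gu F x); split => //; apply: g_base.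
by move=> z [u [hu ->]]; apply: g_max.
Qed.

Lemma lovasz_ge x u : in_base F u -> \sum_i u i * x i <= lovasz F x.
Proof. by move=> hu; apply: (lovasz_spec x).2; exists u. Qed.

Lemma lovasz_eq x u : in_base F u ->
  (forall v, in_base F v -> \sum_i v i * x i <= \sum_i u i * x i) ->
  lovasz F x = \sum_i u i * x i.
Proof.
move=> hu hm; have [[u' [hu' e]] _] := lovasz_spec x.
apply/eqP; rewrite eq_le; apply/andP; split; last exact: lovasz_ge.
by rewrite e; apply: hm.
Qed.

Lemma base_zero u i : in_base F u -> i \notin support_set F -> u i = 0.
Proof.
move=> [h1 h2] hi.
have hS : forall S : {set 'I_N}, i \notin S -> F (i |: S) = F S.
  move=> S hS; case: (eqVneq (F (i |: S)) (F S)) => // hne; exfalso.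
  move/negP: hi; apply; rewrite inE; apply/existsP; exists S; by rewrite hS hne.
apply/eqP; rewrite eq_le; apply/andP; split.
  have := h1 [set i]; rewrite big_set1 -(setU0 [set i]) -/(i |: set0) hS ?inE // F0.
  done.
have := h1 (setT :\ i); have := hS (setT :\ i); rewrite setD11 setD1K ?inE // => e.
rewrite -(e isT) -h2 [in X in _ <= X -> _](bigD1 i) //=.
have -> : \sum_(j | j != i) u j = \sum_(j in setT :\ i) u j.
  by apply: eq_bigl => j; rewrite !inE andbT.
lra.
Qed.
End Lov.

Lemma quad (T : rcfType) (G H : T) : 0 <= H ->
  (forall t, 0 < t -> t <= 1 -> 0 <= 2 * t * G + t ^+ 2 * H) -> 0 <= G.
Proof.
move=> H0 key; rewrite leNgt; apply/negP => hG.
have [hH|hH] := lerP H (- G).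
  have := key 1 ltr01 (lexx 1); rewrite expr1n; lra.
have Hp : 0 < H by lra.
pose t := - G / H.
have t0 : 0 < t by rewrite /t divr_gt0 // oppr_gt0.
have t1 : t <= 1 by rewrite /t ler_pdivrMr // mul1r ltW.
have := key t t0 t1.
have -> : 2 * t * G + t ^+ 2 * H = t * G by rewrite /t; field; rewrite gt_eqF.
by rewrite pmulr_rge0 // leNgt hG.
Qed.

Section Dual.
Variable T : rcfType.
Variables N R : nat.
Variable F : 'I_R -> {set 'I_N} -> T.
Variable w : 'I_N -> T.
Hypothesis Fsub : forall r, submodular (F r).
Hypothesis F0 : forall r, F r set0 = 0.
Hypothesis wpos : forall i, 0 < w i.
Implicit Types (y : 'I_R -> 'I_N -> T) (x : 'I_N -> T).

Definition Pf (x : 'I_N -> T) := \sum_(r < R) lovasz (F r) x + 2^-1 * wnorm2 w x.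
Definition Df (y : 'I_R -> 'I_N -> T) := wnorm2 (fun i => (w i)^-1) (Aop y).
Definition xs (y : 'I_R -> 'I_N -> T) := fun i => - ((w i)^-1 * Aop y i).

Lemma sum_lin (y : 'I_R -> 'I_N -> T) x :
  \sum_(r < R) \sum_i y r i * x i = \sum_i Aop y i * x i.
Proof. by rewrite exchange_big; apply: eq_bigr => i _; rewrite /Aop mulr_suml. Qed.

Lemma ident y x : \sum_i Aop y i * x i + 2^-1 * wnorm2 w x =
  -(2^-1 * Df y) + 2^-1 * \sum_i (w i)^-1 * (w i * x i + Aop y i) ^+ 2.
Proof.
rewrite /Df /wnorm2.
transitivity (\sum_i (Aop y i * x i + 2^-1 * (w i * x i ^+ 2))).
  by rewrite big_split /= mulr_sumr.
transitivity (\sum_i (-(2^-1 * ((w i)^-1 * Aop y i ^+ 2)) +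
                      2^-1 * ((w i)^-1 * (w i * x i + Aop y i) ^+ 2))).
  apply: eq_bigr => i _; have := wpos i; move: (w i) (x i) (Aop y i) => a b c ha.
  by field; rewrite gt_eqF.
by rewrite big_split /= sumrN -!mulr_sumr.
Qed.

Lemma sq_ge0' y x : 0 <= \sum_i (w i)^-1 * (w i * x i + Aop y i) ^+ 2.
Proof.
by apply: sumr_ge0 => i _; rewrite mulr_ge0 ?sqr_ge0 // invr_ge0 ltW.
Qed.

Lemma weak y x : in_B F y ->
  -(2^-1 * Df y) + 2^-1 * \sum_i (w i)^-1 * (w i * x i + Aop y i) ^+ 2 <= Pf x.
Proof.
move=> hy; rewrite -ident /Pf lerD2r -sum_lin; apply: ler_sum => r _.
apply: lovasz_ge; [exact: Fsub | exact: F0 | exact: hy r].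
Qed.

Lemma weak' y x : in_B F y -> -(2^-1 * Df y) <= Pf x.
Proof.
move=> hy; apply: le_trans (weak x hy); rewrite lerDl mulr_ge0 ?sq_ge0' //.
by rewrite invr_ge0.
Qed.

Lemma dual_max y : minimizer_on (in_B F) Df y -> forall r v, in_base (F r) v ->
  \sum_i v i * xs y i <= \sum_i y r i * xs y i.
Proof.
move=> [hy hmin] r v hv.
pose d i := v i - y r i.
pose G := \sum_i (w i)^-1 * Aop y i * d i.
pose H := \sum_i (w i)^-1 * d i ^+ 2.
have H0 : 0 <= H by apply: sumr_ge0 => i _; rewrite mulr_ge0 ?sqr_ge0 // invr_ge0 ltW.
have key : forall t, 0 < t -> t <= 1 -> 0 <= 2 * t * G + t ^+ 2 * H.
  move=> t t0 t1.
  pose yt := fun r' i => if r' == r then y r i + t * d i else y r' i.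
  have hyt : in_B F yt.
    move=> r'; rewrite /yt /=; have [->|ne] := eqVneq r' r; last first.
      exact: hy r'.
    idtac.
    have [hy1 hy2] := hy r; have [hv1 hv2] := hv.
    have e : forall (P : pred 'I_N), \sum_(i | P i) (y r i + t * d i) =
        (1 - t) * \sum_(i | P i) y r i + t * \sum_(i | P i) v i.
      move=> P; rewrite big_split /= -mulr_sumr /d sumrB; ring.
    split.
      move=> S; rewrite e; have := hy1 S; have := hv1 S.
      move: (\sum_(i in S) y r i) (\sum_(i in S) v i) => a b ha hb; nra.
    by rewrite e hy2 hv2; ring.
  have hAt : forall i, Aop yt i = Aop y i + t * d i.
    move=> i; rewrite /Aop (bigD1 r) //= [in RHS](bigD1 r) //= /yt eqxx.
    have -> : \sum_(r' < R | r' != r) (if r' == r then y r i + t * d i else y r' i)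
              = \sum_(r' < R | r' != r) y r' i.
      by apply: eq_bigr => r' /negbTE ->.
    by ring.
  have := hmin yt hyt.
  have -> : Df yt = Df y + 2 * t * G + t ^+ 2 * H.
    rewrite /Df /wnorm2.
    transitivity (\sum_i ((w i)^-1 * Aop y i ^+ 2 + 2 * t * ((w i)^-1 * Aop y i * d i)
                     + t ^+ 2 * ((w i)^-1 * d i ^+ 2))).
      by apply: eq_bigr => i _; rewrite hAt; ring.
    by rewrite !big_split /= -!mulr_sumr.
  lra.
have hG := quad H0 key.
rewrite -subr_ge0 -sumrB.
have -> : \sum_i (y r i * xs y i - v i * xs y i) = G.
  by apply: eq_bigr => i _; rewrite /xs /d; ring.
done.
Qed.

Lemma strong y : minimizer_on (in_B F) Df y ->
  Pf (xs y) = -(2^-1 * Df y) /\ minimizer_on (fun _ => True) Pf (xs y).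
Proof.
move=> hym; have hy := hym.1.
have hP : Pf (xs y) = -(2^-1 * Df y).
  rewrite /Pf.
  have -> : \sum_(r < R) lovasz (F r) (xs y) = \sum_(r < R) \sum_i y r i * xs y i.
    apply: eq_bigr => r _; apply: (lovasz_eq (Fsub r) (F0 r) (hy r)) => v hv.
    exact: dual_max.
  rewrite sum_lin ident big1 ?mulr0 ?addr0 // => i _.
  rewrite /xs; have := wpos i; move: (w i) (Aop y i) => a c ha.
  have -> : a * - (a^-1 * c) + c = 0 by field; rewrite gt_eqF.
  by rewrite expr0n /= mulr0.
split => //; split => // z _; rewrite hP; exact: weak'.
Qed.

Lemma primal_unique y x : minimizer_on (in_B F) Df y ->
  minimizer_on (fun _ => True) Pf x -> forall i, x i = xs y i.
Proof.
move=> hym [_ hx].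
have [hP [_ _]] := strong hym.
have h1 := hx (xs y) I; rewrite hP in h1.
have h2 := weak x hym.1.
have hs : \sum_i (w i)^-1 * (w i * x i + Aop y i) ^+ 2 = 0.
  apply/eqP; rewrite eq_le sq_ge0' andbT; lra.
move=> i.
have hge : forall i, true -> 0 <= (w i)^-1 * (w i * x i + Aop y i) ^+ 2.
  by move=> j _; rewrite mulr_ge0 ?sqr_ge0 // invr_ge0 ltW.
have := psumr_eq0P hge hs (i:=i) isT.
move/eqP; rewrite mulf_eq0 invr_eq0 gt_eqF //= sqrf_eq0 => /eqP.
rewrite /xs; have := wpos i; move: (w i) (x i) (Aop y i) => a b c ha h.
have -> : b = (a * b + c) / a - c / a by field; rewrite gt_eqF.
by rewrite h mul0r sub0r mulrC.
Qed.
End Dual.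

Lemma CS (T : rcfType) (I : finType) (S : {set I}) (z : I -> T) :
  (forall r, r \notin S -> z r = 0) ->
  (\sum_r z r) ^+ 2 <= #|S|%:R * \sum_r z r ^+ 2.
Proof.
move=> hz.
have e1 : \sum_r z r = \sum_(r in S) z r.
  rewrite [LHS](bigID (mem S)) /= [X in _ + X]big1 ?addr0 // => r hr.
have e2 : \sum_r z r ^+ 2 = \sum_(r in S) z r ^+ 2.
  rewrite [LHS](bigID (mem S)) /= [X in _ + X]big1 ?addr0 // => r hr.
  by rewrite hz // expr0n.
rewrite e1 e2; set m : T := #|S|%:R; set Z := \sum_(r in S) z r.
set Q := \sum_(r in S) z r ^+ 2.
have hm : 0 <= m by rewrite /m ler0n.
have e : \sum_(r in S) (m * z r - Z) ^+ 2 = m * (m * Q - Z ^+ 2).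
  transitivity (\sum_(r in S) (m ^+ 2 * z r ^+ 2 + (- (2 * m * Z)) * z r + Z ^+ 2)).
    by apply: eq_bigr => r _; ring.
  rewrite !big_split /= -!mulr_sumr sumr_const -/Q -/Z -mulr_natr -/m; ring.
have h0 : 0 <= m * (m * Q - Z ^+ 2) by rewrite -e sumr_ge0 // => r _; apply: sqr_ge0.
have [m0|mp] := eqVneq m 0.
  have S0 : S = set0.
    by apply/eqP; rewrite -cards_eq0; move/eqP: m0; rewrite /m pnatr_eq0.
  by rewrite /Z /Q S0 !big_set0 expr0n /= mulr0.
have mpos : 0 < m by rewrite lt_def mp hm.
by rewrite -subr_ge0 -(pmulr_rge0 _ mpos).
Qed.

Section Part3.
Variable T : rcfType.
Variables N R : nat.
Variable F : 'I_R -> {set 'I_N} -> T.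
Variable w : 'I_N -> T.
Hypothesis Fsub : forall r, submodular (F r).
Hypothesis F0 : forall r, F r set0 = 0.
Hypothesis wpos : forall i, 0 < w i.
Hypothesis mu_ge1 : forall i, (1 <= mu F i)%N.
Implicit Types (y a : 'I_R -> 'I_N -> T) (x : 'I_N -> T).

Definition Jv a y := wnorm2_prod (@Ivec T N R (fun i => (w i)^-1 * (mu F i)%:R))
  (fun r i => a r i - y r i).
Definition a0 y := fun r i => y r i -
  (if i \in support_set (F r) then Aop y i / (mu F i)%:R else 0).

Lemma sum_ind (z : T) i : \sum_(r < R) (if i \in support_set (F r) then z else 0) = (mu F i)%:R * z.
Proof.
rewrite -big_mkcond /= (eq_bigl (fun r => r \in [set r | i \in support_set (F r)])).
  by rewrite sumr_const mulr_natl.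
by move=> r; rewrite inE.
Qed.

Lemma mu_neq0 i : (mu F i)%:R != 0 :> T.
Proof. by rewrite pnatr_eq0 -lt0n mu_ge1. Qed.

Lemma JvE a y : Jv a y = \sum_i (w i)^-1 * (mu F i)%:R * \sum_(r < R) (a r i - y r i) ^+ 2.
Proof.
rewrite /Jv /wnorm2_prod /wnorm2 /Ivec exchange_big; apply: eq_bigr => i _.
by rewrite mulr_sumr.
Qed.

Lemma a0_A y : in_B F y -> in_A F (a0 y).
Proof.
move=> hy; split.
  move=> i; rewrite /Aop /a0 sumrB sum_ind mulrC divfK ?mu_neq0 //.
  by rewrite subrr.
move=> r i hi; rewrite /a0 (negbTE hi) subr0.
exact: (base_zero (F0 r) (hy r) hi).
Qed.

Lemma a0_val y : in_B F y -> Jv (a0 y) y = Df w y.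
Proof.
move=> hy; rewrite JvE /Df /wnorm2; apply: eq_bigr => i _.
have -> : \sum_(r < R) (a0 y r i - y r i) ^+ 2 =
   \sum_(r < R) (if i \in support_set (F r) then (Aop y i / (mu F i)%:R) ^+ 2 else 0).
  apply: eq_bigr => r _; rewrite /a0.
  by case: (i \in support_set (F r)); rewrite /=; ring.
rewrite sum_ind; have := mu_neq0 i; move: (mu F i)%:R (Aop y i) => m c hm.
rewrite -mulrA; congr (_ * _); by field.
Qed.

Lemma a0_min y a : in_B F y -> in_A F a -> Df w y <= Jv a y.
Proof.
move=> hy [ha1 ha2]; rewrite JvE /Df /wnorm2; apply: ler_sum => i _.
pose S := [set r : 'I_R | i \in support_set (F r)].
have hz : forall r, r \notin S -> a r i - y r i = 0.
  move=> r; rewrite inE => hr.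
  by rewrite (ha2 r i hr) (base_zero (F0 r) (hy r) hr) subrr.
have := CS hz; rewrite -/(mu F i).
have -> : \sum_r (a r i - y r i) = - Aop y i.
  by rewrite sumrB; have := ha1 i; rewrite /Aop => ->; rewrite sub0r.
rewrite sqrrN => h.
rewrite -mulrA; apply: ler_wpM2l; first by rewrite invr_ge0 ltW.
exact: h.
Qed.
End Part3.

Section DualEx.
Variable T : rcfType.
Variables N R : nat.
Variable F : 'I_R -> {set 'I_N} -> T.
Variable w : 'I_N -> T.
Hypothesis Fsub : forall r, submodular (F r).
Hypothesis F0 : forall r, F r set0 = 0.
Hypothesis wpos : forall i, 0 < w i.

Lemma dual_exists : exists y0, minimizer_on (in_B F) (Df w) y0.
Proof.
pose d := (R * N)%N.
pose dec (al : 'rV[T]_d) := fun r i => (vec_mx al : 'M[T]_(R, N)) r i.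
pose enc (y : 'I_R -> 'I_N -> T) : 'rV[T]_d := mxvec (\matrix_(r, i) y r i).
have decK : forall y, dec (enc y) = y.
  move=> y; apply: functional_extensionality => r; apply: functional_extensionality => i.
  by rewrite /dec /enc mxvecK mxE.
have vD : forall (u v : 'rV[T]_d) r i, (vec_mx (u + v) : 'M[T]_(R, N)) r i =
     (vec_mx u : 'M[T]_(R, N)) r i + (vec_mx v : 'M[T]_(R, N)) r i.
  by move=> u v r i; rewrite linearD mxE.
have vZ : forall c (u : 'rV[T]_d) r i, (vec_mx (c *: u) : 'M[T]_(R, N)) r i =
     c * (vec_mx u : 'M[T]_(R, N)) r i.
  by move=> c u r i; rewrite linearZ mxE.
pose g (k : ('I_R * {set 'I_N}) + 'I_R) (al : 'rV[T]_d) : T :=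
  match k with
  | inl (r, S') => \sum_(i in S') dec al r i + (- F r S')
  | inr r => - \sum_i dec al r i + F r setT
  end.
have ha : forall k, affine (g k).
  case=> [[r S']|r].
    apply: (@affine_lin _ _ (fun al => \sum_(i in S') dec al r i)).
      by move=> u v; rewrite -big_split; apply: eq_bigr => i _; rewrite /dec vD.
    by move=> c u; rewrite mulr_sumr; apply: eq_bigr => i _; rewrite /dec vZ.
  apply: (@affine_lin _ _ (fun al => - \sum_i dec al r i)).
    by move=> u v; rewrite -opprD -big_split; congr (- _); apply: eq_bigr => i _; rewrite /dec vD.
  by move=> c u; rewrite mulrN mulr_sumr; congr (- _); apply: eq_bigr => i _; rewrite /dec vZ.
have feq : forall al, in_B F (dec al) <-> forall k, g k al <= 0.
  move=> al; split.
    move=> hy [[r S']|r] /=.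
      by rewrite subr_le0; exact: (hy r).1 S'.
    by rewrite (hy r).2 addNr.
  move=> hk r; split.
    by move=> S'; have := hk (inl (r, S')); rewrite /= subr_le0.
  apply/eqP; rewrite eq_le; apply/andP; split.
    by have := hk (inl (r, setT)); rewrite /= subr_le0 sumT.
  by have := hk (inr r); rewrite /= addrC subr_le0.
pose f (al : 'rV[T]_d) := \row_(i < N) (Num.sqrt ((w i)^-1) * \sum_r dec al r i).
have fD : forall u v, f (u + v) = f u + f v.
  move=> u v; apply/rowP => i; rewrite !mxE -mulrDr -big_split; congr (_ * _).
  by apply: eq_bigr => r _; rewrite /dec vD.
have fZ : forall c u, f (c *: u) = c *: f u.
  move=> c u; apply/rowP => i; rewrite !mxE mulrCA [in RHS]mulr_sumr; congr (_ * _).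
  by apply: eq_bigr => r _; rewrite /dec vZ.
have [K hK] := lin_rep fD fZ.
have hpsi : forall al, nrm (0 + al *m K) = Df w (dec al).
  move=> al; rewrite add0r -hK nrmE /Df /wnorm2; apply: eq_bigr => i _.
  rewrite mxE exprMn sqr_sqrtr ?invr_ge0 ?ltW //.
have hfe : exists al, forall k, g k al <= 0.
  exists (enc (fun r => gu (F r) (fun _ => 0))); apply/feq; rewrite decK => r.
  exact: g_base.
have [al [hal hmin]] := ML_fin ha (Good_nrm 0 K) hfe.
exists (dec al); split; first by apply/feq.
move=> y hy; rewrite -hpsi -(decK y) -hpsi; apply: hmin.
by apply/feq; rewrite decK.
Qed.
End DualEx.

Theorem mainTheorem14 (T : rcfType) (N R : nat)
  (F : 'I_R -> {set 'I_N} -> T) (w : 'I_N -> T)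
  (Fsub : forall r, submodular (F r))
  (F0 : forall r, F r set0 = 0)
  (wpos : forall i, 0 < w i)
  (mu_ge1 : forall i, (1 <= mu F i)%N) :
  let winv : 'I_N -> T := fun i => (w i)^-1 in
  let P : ('I_N -> T) -> T :=
    fun x => \sum_(r < R) lovasz (F r) x + 2^-1 * wnorm2 w x in
  let D : ('I_R -> 'I_N -> T) -> T := fun y => wnorm2 winv (Aop y) in
  let theta : 'I_R -> 'I_N -> T := @Ivec T N R (fun i => winv i * (mu F i)%:R) in
  let J : ('I_R -> 'I_N -> T) * ('I_R -> 'I_N -> T) -> T :=
    fun p => wnorm2_prod theta (fun r i => p.1 r i - p.2 r i) in
  (exists (x0 : 'I_N -> T) (y0 : 'I_R -> 'I_N -> T),
      minimizer_on (fun _ => True) P x0 /\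
      minimizer_on (in_B F) D y0 /\
      P x0 = - (2^-1 * D y0)) /\
  (forall y, minimizer_on (in_B F) D y ->
     forall x, minimizer_on (fun _ => True) P x <->
               (forall i, x i = - (winv i * Aop y i))) /\
  (forall y, in_B F y ->
     exists a0, minimizer_on (in_A F)
                  (fun a => wnorm2_prod theta (fun r i => a r i - y r i)) a0 /\
                wnorm2_prod theta (fun r i => a0 r i - y r i) = D y) /\
  (forall a y, minimizer_on (fun p => in_A F p.1 /\ in_B F p.2) J (a, y) ->
     minimizer_on (in_B F) D y /\ J (a, y) = D y) /\
  (forall y, minimizer_on (in_B F) D y ->
     exists a, minimizer_on (fun p => in_A F p.1 /\ in_B F p.2) J (a, y)).
Proof.
move=> winv P D theta J.
have hA : forall y, in_B F y -> in_A F (a0 F y) := fun y hy => a0_A F0 mu_ge1 hy.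
have hV : forall y, in_B F y -> Jv F w (a0 F y) y = Df w y :=
  fun y hy => a0_val w mu_ge1 hy.
have hM : forall y a, in_B F y -> in_A F a -> Df w y <= Jv F w a y :=
  fun y a hy ha => a0_min F0 wpos hy ha.
split.
  have [y0 hy0] := dual_exists Fsub F0 wpos.
  have [hP hmin] := strong Fsub F0 wpos hy0.
  by exists (xs w y0), y0.
split.
  move=> y hy x; split.
    by move=> hx i; rewrite (primal_unique Fsub F0 wpos hy hx i).
  move=> hx; have -> : x = xs w y by apply: functional_extensionality => i; rewrite hx.
  exact: (strong Fsub F0 wpos hy).2.
split.
  move=> y hy; exists (a0 F y); split; last exact: hV.
  split; first exact: hA.
  by move=> a ha; have := hM y a hy ha; rewrite -(hV y hy).
split.
  move=> a y [[ha hy] hmin].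
  have ge : Df w y <= Jv F w a y := hM y a hy ha.
  have le : forall y', in_B F y' -> Jv F w a y <= Df w y'.
    move=> y' hy'; rewrite -(hV y' hy').
    exact: (hmin (a0 F y', y') (conj (hA y' hy') hy')).
  split; first by split => // y' hy'; apply: le_trans ge (le y' hy').
  by apply/eqP; rewrite eq_le ge andbT; apply: le.
move=> y [hy hmin]; exists (a0 F y); split; first by split => //; apply: hA.
case=> a' y' [ha' hy'] /=.
have e : J (a0 F y, y) = Df w y := hV y hy.
rewrite e; apply: le_trans (hmin y' hy') _.
exact: (hM y' a' hy' ha').
Qed.
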